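(* Let $G$ be a finite graph, $D$ a divisor on $G$, and $f \in R(G,D)$. Then $f$ is an extremal of $R(G,D)$ if and only if there do not exist two proper subsets $V_1, V_2 \subsetneq V(G)$ with $V_1\cup V_2=V(G)$ such that each of $V_1$ and $V_2$ can fire on $D+\mathrm{div}(f)$.
   Context: A finite graph $G$ is connected, with finitely many vertices $V(G)$ and edges $E(G)$, loops and multiple edges allowed. A divisor on $G$ is a formal sum $D=\sum_{x\in V(G)}D(x)[x]$, $D(x)\in{\mathbb{Z}}$; effective if all $D(x)\ge0$. A rational function is $f:V(G)\to{\mathbb{Z}}$; $\mathrm{ord}_x(f)=\sum_{e=\overline{xy}\in E(G)}(f(y)-f(x))$ and $\mathrm{div}(f)=\sum_x\mathrm{ord}_x(f)[x]$. $R(G,D)=\{f: D+\mathrm{div}(f)\ge0\}$. An extremal of $R(G,D)$ is $f\in R(G,D)$ such that $f=\max(g,h)$ with $g,h\in R(G,D)$ implies $f=g$ or $f=h$. For $V'\subseteq V(G)$, $\mathrm{CF}(V')$ is the function equal to $0$ on $V'$ and $-1$ off $V'$; $V'$ can fire on a divisor $E$ if $E+\mathrm{div}(\mathrm{CF}(V'))$ is effective. *)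

(* Defs.v *)
From mathcomp Require Import all_boot all_order all_algebra.
Set Implicit Arguments. Unset Strict Implicit. Unset Printing Implicit Defensive.
Import Order.TTheory GRing.Theory Num.Theory.
Local Open Scope ring_scope.

(* A finite (multi)graph: finite vertex type V, finite edge type E, each edge
   e having endpoints src e and tgt e (the orientation is irrelevant; loops
   src e = tgt e and parallel edges are allowed). *)
Section Graph.
Variables (V E : finType) (src tgt : E -> V).

Definition adjacent : rel V :=
  fun x y => [exists e, ((src e == x) && (tgt e == y)) || ((src e == y) && (tgt e == x))].

Definition connected_graph : Prop := forall x y : V, connect adjacent x y.

Definition divisor := {ffun V -> int}.
Definition ratfun := {ffun V -> int}.

(* ord_x(f) = sum over edges e = xy incident to x of (f y - f x).
   A loop at x contributes f x - f x = 0. *)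
Definition ord (f : ratfun) (x : V) : int :=
  \sum_(e : E | src e == x) (f (tgt e) - f x)
  + \sum_(e : E | (tgt e == x) && (src e != x)) (f (src e) - f x).

Definition divf (f : ratfun) : divisor := [ffun x => ord f x].

Definition effective (D : divisor) : bool := [forall x, 0 <= D x].

Definition addD (D1 D2 : divisor) : divisor := [ffun x => D1 x + D2 x].

Definition inR (D : divisor) (f : ratfun) : bool := effective (addD D (divf f)).

Definition maxf (g h : ratfun) : ratfun := [ffun x => Num.max (g x) (h x)].

Definition extremal (D : divisor) (f : ratfun) : Prop :=
  inR D f /\
  forall g h : ratfun, inR D g -> inR D h -> f = maxf g h -> f = g \/ f = h.

Definition CF (V' : {set V}) : ratfun := [ffun x => if x \in V' then 0 else -1].

Definition can_fire (V' : {set V}) (D : divisor) : bool := inR D (CF V').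

End Graph.

(* Main.v *)
Require Import Defs.
From mathcomp Require Import all_boot all_order all_algebra.
From mathcomp Require Import ring.
From mathcomp Require Import zify.
Import Order.TTheory GRing.Theory Num.Theory.
Local Open Scope ring_scope.

Section Aux.
Variables (V E : finType) (src tgt : E -> V).

Lemma ord_add (f g : ratfun V) x :
  ord src tgt (addD f g) x = ord src tgt f x + ord src tgt g x.
Proof.
rewrite /ord.
rewrite (eq_bigr (fun e => (f (tgt e) - f x) + (g (tgt e) - g x))); last first.
  by move=> e _; rewrite !ffunE; ring.
rewrite [X in _ + X](eq_bigr (fun e => (f (src e) - f x) + (g (src e) - g x))); last first.
  by move=> e _; rewrite !ffunE; ring.
rewrite !big_split /=; ring.
Qed.

Lemma ord_mono (p q : ratfun V) x :
  (forall y, p y <= q y) -> p x = q x -> ord src tgt p x <= ord src tgt q x.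
Proof.
move=> Hle Hx; rewrite /ord; apply: lerD; apply: ler_sum => e _;
  by rewrite Hx lerD2r Hle.
Qed.

Lemma ord_const (c : int) x : ord src tgt [ffun _ => c] x = 0.
Proof.
rewrite /ord !big1 ?addr0 // => e _; by rewrite !ffunE subrr.
Qed.

Lemma div_addD (D f g : ratfun V) :
  addD D (divf src tgt (addD f g)) = addD (addD D (divf src tgt f)) (divf src tgt g).
Proof. by apply/ffunP => x; rewrite !ffunE ord_add addrA. Qed.

Lemma proper_ex (A : {set V}) : A \proper [set: V] -> exists x, x \notin A.
Proof. by move=> /properP [_ [x _ Hx]]; exists x. Qed.

Lemma fire_lemma (D f g : ratfun V) (V1 : {set V}) :
  inR src tgt D f -> inR src tgt D g -> (forall y, g y <= f y) ->
  (forall y, (y \in V1) = (g y == f y)) ->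
  can_fire src tgt V1 (addD D (divf src tgt f)).
Proof.
move=> /forallP hf /forallP hg Hle Hin.
rewrite /can_fire /inR /effective; apply/forallP => x.
rewrite !ffunE.
case Hx: (x \in V1).
- have Hm : ord src tgt g x <= ord src tgt (addD f (CF V1)) x.
    apply: ord_mono.
      move=> y; rewrite !ffunE; case Hy: (y \in V1).
        by rewrite addr0 Hle.
      have : g y != f y by rewrite -Hin Hy.
      move: (Hle y) => Hl Hn.
      have : g y < f y by rewrite lt_neqAle Hn Hl.
      by move=> H; lia.
    by rewrite !ffunE Hx addr0; apply/eqP; rewrite -Hin.
  move: (hg x); rewrite !ffunE => H; rewrite ord_add in Hm.
  by rewrite -addrA; apply: (le_trans H); rewrite lerD2l.
- have H1 := hf x; rewrite !ffunE in H1.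
  have H2 : 0 <= ord src tgt (CF V1) x.
    rewrite -(ord_const (-1) x); apply: ord_mono.
      by move=> y; rewrite !ffunE; case: (y \in V1).
    by rewrite !ffunE Hx.
  by apply: addr_ge0.
Qed.

End Aux.

Theorem lemma3p3 (V E : finType) (src tgt : E -> V)
  (Gconn : connected_graph src tgt)
  (D : divisor V) (f : ratfun V) (hf : inR src tgt D f) :
  extremal src tgt D f <->
  ~ (exists V1 V2 : {set V},
        [/\ V1 \proper [set: V], V2 \proper [set: V], V1 :|: V2 = [set: V],
            can_fire src tgt V1 (addD D (divf src tgt f))
          & can_fire src tgt V2 (addD D (divf src tgt f))]).
Proof.
split.
- move=> [_ Hext] [V1 [V2 [p1 p2 U c1 c2]]].
  have HR : forall W, can_fire src tgt W (addD D (divf src tgt f)) ->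
      inR src tgt D (addD f (CF W)).
    by move=> W; rewrite /can_fire /inR div_addD.
  have Hne : forall W : {set V}, W \proper [set: V] -> f <> addD f (CF W).
    move=> W /proper_ex [x Hx] /ffunP /(_ x); rewrite !ffunE (negbTE Hx).
    by move/eqP; rewrite -subr_eq0 opprD addrA subrr add0r oppr_eq0.
  have Hmax : f = maxf (addD f (CF V1)) (addD f (CF V2)).
    apply/ffunP => x; rewrite !ffunE.
    have : x \in V1 :|: V2 by rewrite U inE.
    rewrite inE; case: (x \in V1); case: (x \in V2) => //= _;
      rewrite maxEle; case: leP => ?; lia.
  by case: (Hext _ _ (HR _ c1) (HR _ c2) Hmax) => /Hne; auto.
- move=> Hno; split => // g h Hg Hh Hfgh.
  have Hgf : forall y, g y <= f y by move=> y; rewrite Hfgh ffunE le_max lexx.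
  have Hhf : forall y, h y <= f y by move=> y; rewrite Hfgh ffunE le_max lexx orbT.
  case: (eqVneq f g) => [->|ngf]; first by left.
  case: (eqVneq f h) => [->|nhf]; first by right.
  exfalso; apply: Hno.
  have prop : forall k : ratfun V, f != k -> [set x | k x == f x] \proper [set: V].
    move=> k nk; apply/properP; split; first exact: subsetT.
    case: (boolP [exists x, k x != f x]) => [/existsP [x Hx]|/existsPn H].
      by exists x => //; rewrite inE.
    exfalso; move/eqP: nk; apply; apply/ffunP => x.
    by move: (H x); rewrite negbK => /eqP ->.
  exists [set x | g x == f x], [set x | h x == f x]; split.
  + exact: prop.
  + exact: prop.
  + apply/setP => x; rewrite !inE Hfgh ffunE.
    by rewrite maxEle; case: leP => _; rewrite eqxx ?orbT.
  + by apply: (@fire_lemma V E src tgt D f g _ hf Hg Hgf) => y; rewrite inE.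
  + by apply: (@fire_lemma V E src tgt D f h _ hf Hh Hhf) => y; rewrite inE.
Qed.
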